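(* Let $m\ge 2$ and let $X(0),X(1),\dots$ be i.i.d. random vectors in $\mathbb{R}^m$ whose components satisfy $X_{\min,i}\le X_i(k)\le X_{\max,i}$ almost surely, where $X_{\max,i}<\infty$ and $X_{\min,i}>-1$, and where at least one component is riskless, i.e. equal to a constant $r\ge 0$ almost surely. Fix an integer $n\ge 1$, let $\mathcal{X}_{n,i}:=\prod_{k=0}^{n-1}(1+X_i(k))-1$, $\mathcal{X}_n=(\mathcal{X}_{n,1},\dots,\mathcal{X}_{n,m})^T$, $\mathcal{K}:=\{K\in\mathbb{R}^m: K_i\ge 0,\ \sum_i K_i=1\}$ and $g_n(K):=\frac{1}{n}\mathbb{E}[\log(1+K^T\mathcal{X}_n)]$. Let $j\in\{1,\dots,m\}$ and let $e_j$ be the $j$th standard unit vector. Then $e_j$ is a maximizer of $g_n$ over $\mathcal{K}$ if and only if $$\mathbb{E}\left[\frac{1+X_i(0)}{1+X_j(0)}\right]\le 1\quad\text{for every } i\neq j.$$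
   Context: $X_i(k)$ is the return of asset $i$ at step $k$; components may be arbitrarily correlated. $n$ is the number of steps between rebalancings. A maximizer of $g_n$ over $\mathcal{K}$ is called a Kelly optimal feedback gain. *)

(* Defs.v *)
From HB Require Import structures.
From mathcomp Require Import all_boot all_order all_algebra.
From mathcomp Require Import all_classical all_reals all_analysis.
Set Implicit Arguments. Unset Strict Implicit. Unset Printing Implicit Defensive.
Import Order.TTheory GRing.Theory Num.Theory.
Local Open Scope classical_set_scope.
Local Open Scope ring_scope.

Section kelly.
Context {d : measure_display} {T : measurableType d} {R : realType}.
Variables (P : probability T R) (m : nat).

(* X k i : return of asset i at step k, as a function on the sample space *)
Definition vec_event (Y : 'I_m -> T -> R) (B : 'I_m -> set R) : set T :=
  [set x | forall i, B i (Y i x)].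

(* Independence and
   identical distribution are stated on the generating pi-system of
   measurable rectangles  {X(k) in B_1 x ... x B_m}.  Taking B k = setT for
   the indices not involved yields the product rule over every finite
   subfamily. *)
Definition iid_vectors (X : nat -> 'I_m -> T -> R) : Prop :=
  [/\ (forall k i, measurable_fun setT (X k i)),
      (forall (N : nat) (B : nat -> 'I_m -> set R),
          (forall k i, measurable (B k i)) ->
          P [set x | forall k, (k < N)%N -> forall i, B k i (X k i x)]
          = (\prod_(k < N) P (vec_event (X k) (B k)))%E)
    & (forall k (B : 'I_m -> set R), (forall i, measurable (B i)) ->
          P (vec_event (X k) B) = P (vec_event (X 0%N) B))].

Definition Xcal (X : nat -> 'I_m -> T -> R) (n : nat) (i : 'I_m) (x : T) : R :=
  \prod_(k < n) (1 + X k i x) - 1.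

Definition simplexK (K : 'I_m -> R) : Prop :=
  (forall i, 0 <= K i) /\ \sum_(i < m) K i = 1.

Definition g_n (X : nat -> 'I_m -> T -> R) (n : nat) (K : 'I_m -> R) : \bar R :=
  ((n%:R)^-1)%:E * 'E_P[fun x => ln (1 + \sum_(i < m) K i * Xcal X n i x)].

Definition unit_vec (j : 'I_m) : 'I_m -> R := fun i => if i == j then 1 else 0.

End kelly.

(* Main.v *)
Require Import Defs.
From HB Require Import structures.
From mathcomp Require Import all_boot all_order all_algebra.
From mathcomp Require Import all_classical all_reals all_analysis.
From mathcomp Require Import ring lra measurable_realfun.
Import Order.TTheory GRing.Theory Num.Theory.
Local Open Scope classical_set_scope.
Local Open Scope ring_scope.
Section tools.
Context {d : measure_display} {T : measurableType d} {R : realType}.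
Variable P : probability T R.

Definition bm (f : T -> R) :=
  measurable_fun setT f /\ exists M : R, forall x, `|f x| <= M.

Definition Er (f : T -> R) : R := fine (('E_P[f])%E).

Lemma bm_int f : bm f -> P.-integrable setT (EFin \o f).
Proof.
move=> [mf [M hM]]; apply: measurable_bounded_integrable => //.
  by apply: (le_lt_trans (probability_le1 P measurableT)); exact: ltry.
rewrite /bounded_near; near=> K => x _ /=; apply: le_trans (hM x) _.
near: K; apply: nbhs_pinfty_ge; exact: num_real.
Unshelve. all: by end_near.
Qed.

Lemma E_Er f : bm f -> ('E_P[f])%E = (Er f)%:E.
Proof.
move=> bf; rewrite /Er fineK // unlock.
exact: (integrable_fin_num measurableT (bm_int _ bf)).
Qed.

Lemma bm_cst c : bm (fun _ => c).
Proof. by split; [exact: measurable_cst | exists `|c|]. Qed.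

Lemma bmD f g : bm f -> bm g -> bm (fun x => f x + g x).
Proof.
move=> [mf [M hM]] [mg [N hN]]; split; first exact: measurable_funD.
by exists (M + N) => x; apply: le_trans (ler_normD _ _) _; apply: lerD.
Qed.

Lemma bmM f g : bm f -> bm g -> bm (fun x => f x * g x).
Proof.
move=> [mf [M hM]] [mg [N hN]]; split; first exact: measurable_funM.
exists (M * N) => x; rewrite normrM; apply: ler_pM => //.
Qed.

Lemma bm_indic A : measurable A -> bm (\1_A).
Proof.
move=> mA; split; first exact: measurable_indic.
by exists 1 => x; rewrite indicE; case: (x \in A); rewrite ?normr1 ?normr0.
Qed.

Lemma bm_sum (I : Type) (s : seq I) (F : I -> T -> R) :
  (forall i, bm (F i)) -> bm (fun x => \sum_(i <- s) F i x).
Proof.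
move=> bF; elim: s => [|a s IH].
  by under eq_fun do rewrite big_nil; exact: bm_cst.
by under eq_fun do rewrite big_cons; exact: bmD.
Qed.

Lemma bm_prod (I : Type) (s : seq I) (F : I -> T -> R) :
  (forall i, bm (F i)) -> bm (fun x => \prod_(i <- s) F i x).
Proof.
move=> bF; elim: s => [|a s IH].
  by under eq_fun do rewrite big_nil; exact: bm_cst.
by under eq_fun do rewrite big_cons; exact: bmM.
Qed.

Lemma ErD f g : bm f -> bm g -> Er (fun x => f x + g x) = Er f + Er g.
Proof.
move=> bf bg; apply: EFin_inj; rewrite -E_Er ?EFinD -?E_Er //; last exact: bmD.
rewrite !unlock; exact: (integralD_EFin measurableT (bm_int _ bf) (bm_int _ bg)).
Qed.

Lemma ErZ k f : bm f -> Er (fun x => k * f x) = k * Er f.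
Proof.
move=> bf; apply: EFin_inj; rewrite -E_Er ?EFinM -?E_Er //; last exact: bmM (bm_cst _) bf.
rewrite !unlock; exact: (integralZl measurableT (bm_int _ bf)).
Qed.

Lemma Er_cst c : Er (fun _ => c) = c.
Proof. by rewrite /Er expectation_cst. Qed.

Lemma Er_indic A : measurable A -> Er (\1_A) = fine (P A).
Proof. by move=> mA; rewrite /Er expectation_indic. Qed.

Lemma Er_sum (I : Type) (s : seq I) (F : I -> T -> R) :
  (forall i, bm (F i)) -> Er (fun x => \sum_(i <- s) F i x) = \sum_(i <- s) Er (F i).
Proof.
move=> bF; elim: s => [|a s IH].
  by under eq_fun do rewrite big_nil; rewrite big_nil Er_cst.
under eq_fun do rewrite big_cons; rewrite big_cons ErD ?IH //; exact: bm_sum.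
Qed.

Lemma Er_le f g : bm f -> bm g -> (forall x, f x <= g x) -> Er f <= Er g.
Proof.
move=> bf bg fg; rewrite -lee_fin -!E_Er // !unlock.
apply: (le_integral measurableT (bm_int _ bf) (bm_int _ bg)) => x _.
by rewrite lee_fin.
Qed.

Lemma Er_ext f g : (forall x, f x = g x) -> Er f = Er g.
Proof. by move=> fg; congr Er; apply: funext. Qed.

Lemma Er_near f g e : bm f -> bm g -> (forall x, `|f x - g x| <= e) ->
  `|Er f - Er g| <= e.
Proof.
move=> bf bg fg.
have h1 : Er f <= Er g + e.
  have -> : Er g + e = Er (fun x => g x + e) by rewrite ErD ?Er_cst //; exact: bm_cst.
  apply: Er_le => //; first by apply: bmD => //; exact: bm_cst.
  by move=> x; have := fg x; rewrite ler_norml => /andP[_ h]; lra.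
have h2 : Er g <= Er f + e.
  have -> : Er f + e = Er (fun x => f x + e) by rewrite ErD ?Er_cst //; exact: bm_cst.
  apply: Er_le => //; first by apply: bmD => //; exact: bm_cst.
  by move=> x; have := fg x; rewrite ler_norml => /andP[h _]; lra.
rewrite ler_norml; apply/andP; split; lra.
Qed.

Lemma E_ae f g : measurable_fun setT f -> measurable_fun setT g ->
  {ae P, forall x, f x = g x} -> ('E_P[f])%E = ('E_P[g])%E.
Proof.
move=> mf mg hfg; rewrite !unlock.
apply: ae_eq_integral => //; try exact/measurable_EFinP.
by apply: filterS hfg => x /= ->.
Qed.

End tools.
Section iid.
Context {d : measure_display} {T : measurableType d} {R : realType}.
Variables (P : probability T R) (m : nat) (X : nat -> 'I_m -> T -> R).
Hypothesis hX : iid_vectors P X.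

Lemma mX k i : measurable_fun setT (X k i).
Proof. by case: hX. Qed.

Lemma meas_pre k i (A : set R) : measurable A -> measurable (X k i @^-1` A).
Proof. by move=> mA; rewrite -[_ @^-1` _]setTI; exact: mX. Qed.

Lemma meas_vec k (B : 'I_m -> set R) : (forall i, measurable (B i)) ->
  measurable (vec_event (X k) B).
Proof.
move=> mB.
suff H : forall s : seq 'I_m,
    measurable [set x | forall i, i \in s -> B i (X k i x)].
  have -> : vec_event (X k) B = [set x | forall i, i \in enum 'I_m -> B i (X k i x)].
    apply/seteqP; split => x /= h i.
      by move=> _; exact: h.
    by apply: h; rewrite mem_enum.
  exact: H.
elim => [|a s IH].
  have -> : [set x | forall i, i \in [::] -> B i (X k i x)] = setT.
    by apply/seteqP; split => x // _ i; rewrite in_nil.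
  exact: measurableT.
have -> : [set x | forall i, i \in a :: s -> B i (X k i x)] =
    (X k a @^-1` B a) `&` [set x | forall i, i \in s -> B i (X k i x)].
  apply/seteqP; split => x /=.
    by move=> h; split; [apply: h; rewrite mem_head | move=> i hi; apply: h; rewrite in_cons hi orbT].
  move=> [h1 h2] i; rewrite in_cons => /orP[/eqP -> //|]; exact: h2.
by apply: measurableI => //; exact: meas_pre.
Qed.

Variables (A : finType) (c : A -> R) (Bs : A -> 'I_m -> set R).
Hypothesis mBs : forall a i, measurable (Bs a i).

Definition Ev k a := vec_event (X k) (Bs a).
Definition S k x := \sum_(a : A) c a * \1_(Ev k a) x.

Lemma mEv k a : measurable (Ev k a).
Proof. exact: meas_vec. Qed.

Lemma bmS k : bm (S k).
Proof.
apply: bm_sum => a; apply: bmM; first exact: bm_cst.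
exact/bm_indic/mEv.
Qed.

Lemma Er_S k : Er P (S k) = \sum_(a : A) c a * fine (P (Ev k a)).
Proof.
rewrite /S Er_sum; last first.
  by move=> a; apply: bmM; [exact: bm_cst | exact/bm_indic/mEv].
apply: eq_bigr => a _; rewrite ErZ ?Er_indic //; [exact: mEv | exact/bm_indic/mEv].
Qed.

Lemma Er_S0 k : Er P (S k) = Er P (S 0).
Proof.
rewrite !Er_S; apply: eq_bigr => a _; congr (_ * fine _).
by case: hX => _ _ h; apply: h.
Qed.

Lemma finP (E : set T) : measurable E -> (fine (P E))%:E = P E.
Proof. by move=> mE; rewrite fineK // fin_num_measure. Qed.

Lemma core N : Er P (fun x => \prod_(k < N) S k x) = \prod_(k < N) Er P (S k).
Proof.
pose Bp (f : {ffun 'I_N -> A}) (k : nat) : 'I_m -> set R :=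
  if insub k is Some o' then Bs (f o') else fun _ => setT.
pose Ef f := [set x | forall k, (k < N)%N -> forall i, Bp f k i (X k i x)].
have mBp f k i : measurable (Bp f k i).
  rewrite /Bp; case: insub; [move=> ?; exact: mBs | exact: measurableT].
have Bpo f (o : 'I_N) : Bp f o = Bs (f o) by rewrite /Bp valK.
have mEf f : measurable (Ef f).
  have -> : Ef f = \bigcap_(k in [set k | (k < N)%N]) vec_event (X k) (Bp f k).
    by apply/seteqP; split => x /= h k hk; [exact: h|exact: h].
  by apply: bigcap_measurableType => k _; exact: meas_vec.
have pw x : \prod_(k < N) S k x =
    \sum_(f : {ffun 'I_N -> A}) (\prod_(k < N) c (f k)) * \1_(Ef f) x.
  rewrite /S bigA_distr_bigA; apply: eq_bigr => f _.
  rewrite big_split; congr (_ * _); rewrite !indicE.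
  have [h|h] := boolP (x \in Ef f).
    rewrite big1 // => k _; rewrite indicE.
    suff -> : x \in Ev k (f k) by [].
    apply/mem_set => i; move/set_mem: h => /(_ k (ltn_ord k) i).
    by rewrite Bpo.
  move/negP: h; rewrite in_setE => h.
  have : exists k : 'I_N, ~ Ev k (f k) x.
    apply/not_existsP => hk; apply: h => k kN i.
    have := hk (Ordinal kN); move/contrapT.
    by rewrite /Ev /vec_event /= => /(_ i); rewrite -(Bpo f (Ordinal kN)).
  move=> [k hk]; rewrite (bigD1 k) //= indicE memNset // mul0r //.
rewrite (Er_ext P _ _ pw) Er_sum; last first.
  by move=> f; apply: bmM; [exact: bm_cst | exact/bm_indic].
rewrite (eq_bigr (fun f : {ffun 'I_N -> A} => (\prod_(k < N) c (f k)) * fine (P (Ef f)))); last first.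
  by move=> f _; rewrite ErZ ?Er_indic //; exact/bm_indic.
rewrite (eq_bigr (fun k : 'I_N => \sum_(a : A) c a * fine (P (Ev k a)))); last first.
  by move=> k _; rewrite Er_S.
rewrite bigA_distr_bigA; apply: eq_bigr => f _.
rewrite big_split /=; congr (_ * _).
case: hX => _ hind _; rewrite /Ef hind //.
rewrite (eq_bigr (fun k : 'I_N => (fine (P (Ev k (f k))))%:E)); last first.
  by move=> k _; rewrite /Ev -Bpo finP //; rewrite Bpo; exact: mEv.
by rewrite prodEFin.
Qed.

End iid.
Section reals.
Context {R : realType}.

Lemma prod_near N (a b : 'I_N -> R) (C e : R) : 1 <= C -> 0 <= e ->
  (forall k, `|a k| <= C) -> (forall k, `|b k| <= C) ->
  (forall k, `|a k - b k| <= e) ->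
  `|\prod_(k < N) a k - \prod_(k < N) b k| <= N%:R * C ^+ N * e.
Proof.
move=> C1 e0; elim: N a b => [|N IH] a b ha hb hab.
  by rewrite !big_ord0 subrr normr0 mul0r mul0r.
rewrite !big_ord_recr /=.
set pa := \prod_(i < N) a (widen_ord (leqnSn N) i).
set pb := \prod_(i < N) b (widen_ord (leqnSn N) i).
have hpa : `|pa| <= C ^+ N.
  rewrite /pa normr_prod; have -> : C ^+ N = \prod_(i < N) C by rewrite prodr_const card_ord.
  by apply: ler_prod => i _; rewrite normr_ge0 ha.
have ih : `|pa - pb| <= N%:R * C ^+ N * e by apply: IH.
have -> : pa * a ord_max - pb * b ord_max =
          pa * (a ord_max - b ord_max) + (pa - pb) * b ord_max by ring.
apply: le_trans (ler_normD _ _) _; rewrite !normrM.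
have C0 : 0 <= C by lra.
have cN0 : 0 <= C ^+ N by exact: exprn_ge0.
have h1 : `|pa| * `|a ord_max - b ord_max| <= C ^+ N * e.
  by apply: ler_pM => //; rewrite normr_ge0.
have h2 : `|pa - pb| * `|b ord_max| <= N%:R * C ^+ N * e * C.
  by apply: ler_pM => //; rewrite normr_ge0.
have cN1 : C ^+ N <= C ^+ N.+1.
  by rewrite exprS ler_peMl.
rewrite exprS -natr1.
have hNe : 0 <= N%:R * e by rewrite mulr_ge0.
have : C ^+ N * e <= C * C ^+ N * e by rewrite -exprS ler_wpM2r.
nra.
Qed.

Definition cnt (L : nat) (dl v : R) : R := \sum_(l < L) (((l.+1)%:R * dl <= v)%R)%:R.

Lemma cnt_full L dl v : 0 <= dl -> L%:R * dl <= v -> cnt L dl v = L%:R.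
Proof.
move=> d0 hv; rewrite /cnt (eq_bigr (fun _ => 1)).
  by rewrite sumr_const card_ord.
move=> l _; suff -> : (l.+1)%:R * dl <= v by [].
apply: le_trans hv; apply: ler_wpM2r => //; rewrite ler_nat; exact: ltn_ord.
Qed.

Lemma cnt_bounds L dl v : 0 <= dl -> 0 <= v -> v <= L%:R * dl ->
  v - dl <= dl * cnt L dl v <= v.
Proof.
move=> d0; elim: L v => [|L IH] v v0 hv.
  rewrite mul0r in hv; have -> : v = 0 by apply/eqP; rewrite eq_le hv v0.
  by rewrite /cnt big_ord0 mulr0; apply/andP; split; lra.
rewrite /cnt big_ord_recr /= -/(cnt L dl v) mulrDr.
rewrite -natr1 mulrDl mul1r in hv *.
set Ld := L%:R * dl in hv *.
have [hle|hlt] := leP v Ld.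
  have /andP[i1 i2] := IH v v0 hle.
  have [h|h] := leP (Ld + dl) v; rewrite /=.
    have dl0 : dl = 0 by apply/eqP; rewrite eq_le d0 andbT; lra.
    have vz : v = 0 by move: hle; rewrite /Ld dl0 mulr0 => hle'; lra.
    by rewrite dl0 vz !mul0r addr0 subr0 lexx.
  by rewrite mulr0 addr0; apply/andP; split; lra.
rewrite cnt_full //; last by apply: ltW.
rewrite [dl * L%:R]mulrC -/Ld.
have [h|h] := leP (Ld + dl) v; rewrite /= ?mulr1 ?mulr0 ?addr0.
  by apply/andP; split; lra.
by apply/andP; split; lra.
Qed.

End reals.
Lemma eq_of_small {R : realType} (x y K : R) : 0 <= K ->
  (forall L : nat, (0 < L)%N -> `|x - y| <= K / L%:R) -> x = y.
Proof.
move=> K0 h; apply/eqP; rewrite -subr_eq0 -normr_eq0; apply/negPn/negP => hne.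
have t0 : 0 < `|x - y| by rewrite lt_def hne normr_ge0.
set t := `|x - y| in t0 h hne.
have hb := archi_boundP (divr_ge0 K0 (ltW t0)).
set B := Num.Def.archi_bound (K / t) in hb.
have := h B.+1 isT.
have LB : 0 < (B.+1)%:R :> R by rewrite ltr0n.
rewrite ler_pdivlMr // => h2.
have : K < B%:R * t by rewrite -ltr_pdivrMr.
rewrite -natr1 in h2; nra.
Qed.

Section factor.
Context {d : measure_display} {T : measurableType d} {R : realType}.
Variables (P : probability T R) (m : nat) (X : nat -> 'I_m -> T -> R).
Hypothesis hX : iid_vectors P X.
Variables (phi psi : R -> R) (Mf Mg : R) (i j : 'I_m).
Hypotheses (mphi : measurable_fun setT phi) (mpsi : measurable_fun setT psi).
Hypotheses (phi0 : forall y, 0 <= phi y) (phiM : forall y, phi y <= Mf).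
Hypotheses (psi0 : forall y, 0 <= psi y) (psiM : forall y, psi y <= Mg).

Definition Dk k x := phi (X k i x) * psi (X k j x).

Lemma mlev (g : R -> R) t : measurable_fun setT g -> measurable [set y | t <= g y].
Proof.
move=> mg; have := mg measurableT _ (measurable_itv `[t, +oo[); rewrite setTI.
congr measurable; apply/seteqP; split => y /=; rewrite in_itv /= andbT //.
Qed.

Let mXh k l : measurable_fun setT (X k l).
Proof. exact: (@mX _ _ _ P m X hX). Qed.

Lemma bmDk k : bm (Dk k).
Proof.
split.
  rewrite /Dk; apply: measurable_funM; apply: measurableT_comp => //; exact: mXh.
exists (Mf * Mg) => x; rewrite /Dk normrM !ger0_norm //.
by apply: ler_pM => //.
Qed.

Lemma Mf0 : 0 <= Mf. Proof. exact: le_trans (phi0 0) (phiM 0). Qed.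
Lemma Mg0 : 0 <= Mg. Proof. exact: le_trans (psi0 0) (psiM 0). Qed.

Lemma Er_bound (f : T -> R) C : bm f -> (forall x, `|f x| <= C) -> `|Er P f| <= C.
Proof.
move=> bf hf; have := @Er_near _ _ _ P f (fun _ => 0) C bf (bm_cst 0).
rewrite Er_cst subr0; apply => x; rewrite subr0; exact: hf.
Qed.

Let C := 1 + Mf * Mg.
Let C1 : 1 <= C.
Proof. by rewrite /C lerDl mulr_ge0 // ?Mf0 ?Mg0. Qed.

Lemma DkC k x : `|Dk k x| <= C.
Proof.
rewrite /Dk normrM !ger0_norm //; apply: le_trans (_ : Mf * Mg <= C).
  by apply: ler_pM.
by rewrite /C lerDr.
Qed.

Section approx.
Variable L : nat.
Hypothesis L0 : (0 < L)%N.
Let dl := Mf / L%:R.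
Let dl' := Mg / L%:R.
Let Ai : finType := ('I_L * 'I_L)%type.
Let cc (a : Ai) := dl * dl'.
Let Bs (a : Ai) (q : 'I_m) : set R :=
  (if q == i then [set y | (a.1.+1)%:R * dl <= phi y] else setT) `&`
  (if q == j then [set y | (a.2.+1)%:R * dl' <= psi y] else setT).

Let mBs a q : measurable (Bs a q).
Proof.
apply: measurableI; case: ifP => _; try exact: measurableT; exact: mlev.
Qed.

Let Sk k := @S _ _ _ m X Ai cc Bs k.

Let dl0 : 0 <= dl. Proof. by rewrite divr_ge0 ?Mf0. Qed.
Let dl'0 : 0 <= dl'. Proof. by rewrite divr_ge0 ?Mg0. Qed.
Let LdM : L%:R * dl = Mf.
Proof. by rewrite /dl mulrC divfK // pnatr_eq0 -lt0n. Qed.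
Let LdM' : L%:R * dl' = Mg.
Proof. by rewrite /dl' mulrC divfK // pnatr_eq0 -lt0n. Qed.

Let Sk_eq k x : Sk k x = (dl * cnt L dl (phi (X k i x))) * (dl' * cnt L dl' (psi (X k j x))).
Proof.
rewrite /Sk /S /cnt mulrACA big_distrlr pair_bigA mulr_sumr /=.
apply: eq_bigr => -[l l'] _ /=; rewrite /cc; congr (_ * _).
rewrite indicE.
have [h1|h1] := boolP ((l.+1)%:R * dl <= phi (X k i x));
have [h2|h2] := boolP ((l'.+1)%:R * dl' <= psi (X k j x)); rewrite /= ?mulr1 ?mulr0 ?mul0r.
- suff -> : x \in @Ev _ _ _ m X Ai Bs k (l, l') by [].
  apply/mem_set => q; rewrite /Bs /=; split; case: ifP => [/eqP->|] //.
- rewrite memNset // => /(_ j) [_]; rewrite eqxx /=; exact/negP.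
- rewrite memNset // => /(_ i) []; rewrite eqxx /=; move=> + _; exact/negP.
- rewrite memNset // => /(_ i) []; rewrite eqxx /=; move=> + _; exact/negP.
Qed.

Let cnt_ge0 (dd v : R) : 0 <= cnt L dd v.
Proof. by apply: sumr_ge0 => l _; rewrite ler0n. Qed.

Let e := dl * Mg + Mf * dl'.

Let Sk_near k x : `|Dk k x - Sk k x| <= e.
Proof.
rewrite Sk_eq /Dk /e.
set a := phi (X k i x); set b := psi (X k j x).
set a' := dl * _; set b' := dl' * _.
have aM : a <= Mf := phiM _.
have bM : b <= Mg := psiM _.
have a0 : 0 <= a := phi0 _.
have b0 : 0 <= b := psi0 _.
have /andP[ha1 ha2] : a - dl <= a' <= a.
  by apply: cnt_bounds; rewrite ?LdM.
have /andP[hb1 hb2] : b - dl' <= b' <= b.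
  by apply: cnt_bounds; rewrite ?LdM'.
have a'0 : 0 <= a' by rewrite mulr_ge0.
have b'0 : 0 <= b' by rewrite mulr_ge0.
have -> : a * b - a' * b' = a * (b - b') + (a - a') * b' by ring.
have t1 : 0 <= a * (b - b') <= Mf * dl'.
  apply/andP; split; first by rewrite mulr_ge0 // subr_ge0.
  by apply: ler_pM => //; [rewrite subr_ge0 | lra].
have t2 : 0 <= (a - a') * b' <= dl * Mg.
  apply/andP; split; first by rewrite mulr_ge0 // subr_ge0.
  by apply: ler_pM => //; [rewrite subr_ge0 | lra | lra].
rewrite ler_norml; apply/andP; split; lra.
Qed.

Let SkC k x : `|Sk k x| <= C.
Proof.
rewrite Sk_eq; apply: le_trans (_ : Mf * Mg <= C); last by rewrite /C lerDr.
rewrite normrM !ger0_norm ?mulr_ge0 //.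
have /andP[_ h1] : phi (X k i x) - dl <= dl * cnt L dl (phi (X k i x)) <= phi (X k i x).
  by apply: cnt_bounds; rewrite ?LdM.
have /andP[_ h2] : psi (X k j x) - dl' <= dl' * cnt L dl' (psi (X k j x)) <= psi (X k j x).
  by apply: cnt_bounds; rewrite ?LdM'.
apply: ler_pM; rewrite ?mulr_ge0 ?Mf0 ?Mg0 //.
  exact: le_trans h1 (phiM _).
exact: le_trans h2 (psiM _).
all: first [exact: Mf0 | exact: Mg0].
Qed.

Let bmSk k : bm (Sk k).
Proof. exact: (@bmS _ _ _ P m X hX Ai cc Bs mBs). Qed.

Let e0 : 0 <= e.
Proof. by rewrite /e addr_ge0 // mulr_ge0 ?Mf0 ?Mg0. Qed.

Lemma approx_id k : `|Er P (Dk k) - Er P (Dk 0)| <= e + e.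
Proof.
have h1 := @Er_near _ _ _ P _ _ _ (bmDk k) (bmSk k) (Sk_near k).
have h2 := @Er_near _ _ _ P _ _ _ (bmDk 0) (bmSk 0) (Sk_near 0).
have h3 : Er P (Sk k) = Er P (Sk 0) by exact: (@Er_S0 _ _ _ P m X hX Ai cc Bs mBs).
rewrite h3 in h1.
have := ler_normD (Er P (Dk k) - Er P (Sk 0)) (Er P (Sk 0) - Er P (Dk 0)).
rewrite distrC in h2.
have -> : Er P (Dk k) - Er P (Sk 0) + (Er P (Sk 0) - Er P (Dk 0)) = Er P (Dk k) - Er P (Dk 0) by ring.
lra.
Qed.

Lemma approx_prod N : `|Er P (fun x => \prod_(k < N) Dk k x) - \prod_(k < N) Er P (Dk k)|
   <= N%:R * C ^+ N * e + N%:R * C ^+ N * e.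
Proof.
have bmP1 : bm (fun x => \prod_(k < N) Dk k x) by apply: bm_prod => k; exact: bmDk.
have bmP2 : bm (fun x => \prod_(k < N) Sk k x) by apply: bm_prod => k; exact: bmSk.
have h1 : `|Er P (fun x => \prod_(k < N) Dk k x) - Er P (fun x => \prod_(k < N) Sk k x)|
    <= N%:R * C ^+ N * e.
  apply: Er_near => // x; apply: prod_near => //;
  by move=> k; first [exact: DkC | exact: SkC | exact: Sk_near].
have h2 : `|\prod_(k < N) Er P (Sk k) - \prod_(k < N) Er P (Dk k)| <= N%:R * C ^+ N * e.
  apply: prod_near => //; move=> k.
  - by apply: Er_bound => //; exact: SkC.
  - by apply: Er_bound => //; first [exact: bmDk | exact: DkC].
  - rewrite distrC; apply: Er_near => //; first [exact: bmDk | exact: Sk_near].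
have h3 : Er P (fun x => \prod_(k < N) Sk k x) = \prod_(k < N) Er P (Sk k).
  exact: (@core _ _ _ P m X hX Ai cc Bs mBs).
rewrite h3 in h1.
have := ler_normD (Er P (fun x => \prod_(k < N) Dk k x) - \prod_(k < N) Er P (Sk k))
   (\prod_(k < N) Er P (Sk k) - \prod_(k < N) Er P (Dk k)).
set u := Er P _; set v := \prod_(k < N) Er P (Sk k); set w := \prod_(k < N) Er P (Dk k).
have -> : u - v + (v - w) = u - w by ring.
lra.
Qed.

Lemma e_eq : e = (Mf * Mg + Mf * Mg) / L%:R.
Proof. by rewrite /e /dl /dl'; field; rewrite pnatr_eq0 -lt0n. Qed.

End approx.

Lemma Dk_id k : Er P (Dk k) = Er P (Dk 0).
Proof.
apply: (@eq_of_small _ _ _ ((Mf * Mg + Mf * Mg) + (Mf * Mg + Mf * Mg))).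
  by rewrite !addr_ge0 // mulr_ge0 ?Mf0 ?Mg0.
move=> L L0; apply: le_trans (@approx_id L L0 k) _.
by rewrite e_eq // -mulrDl.
Qed.

Lemma factor N : Er P (fun x => \prod_(k < N) Dk k x) = Er P (Dk 0) ^+ N.
Proof.
have -> : Er P (Dk 0) ^+ N = \prod_(k < N) Er P (Dk k).
  by rewrite (eq_bigr (fun _ => Er P (Dk 0))) ?prodr_const ?card_ord // => k _; rewrite Dk_id.
apply: (@eq_of_small _ _ _ ((N%:R * C ^+ N * (Mf * Mg + Mf * Mg)) + (N%:R * C ^+ N * (Mf * Mg + Mf * Mg)))).
  by rewrite !addr_ge0 // !mulr_ge0 ?exprn_ge0 ?addr_ge0 ?mulr_ge0 ?Mf0 ?Mg0 //; lra.
move=> L L0; apply: le_trans (@approx_prod L L0 N) _.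
rewrite e_eq // le_eqVlt; apply/orP; left; apply/eqP; field; by rewrite pnatr_eq0 -lt0n.
Qed.

End factor.
Section misc.
Context {R : realType}.

Lemma mem_pos (x : R) : (x \in (`]0, +oo[%classic : set R)) = (0 < x).
Proof. by apply/idP/idP; rewrite inE /= in_itv /= andbT. Qed.

Lemma mem_neg (x : R) : (x \in (`]-oo, 0[%classic : set R)) = (x < 0).
Proof. by apply/idP/idP; rewrite inE /= in_itv /=. Qed.

Lemma measurable_inv : measurable_fun setT (@GRing.inv R).
Proof.
have -> : (@GRing.inv R) = (fun x => \1_(`]0, +oo[%classic : set R) x * expR (- ln x)
   - \1_(`]-oo, 0[%classic : set R) x * expR (- ln (- x))).
  apply: funext => x; rewrite !indicE mem_pos mem_neg.
  have [x0|x0|->] := ltgtP x 0.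
  - rewrite mul0r sub0r mul1r expRN lnK; last by rewrite posrE; lra.
    by rewrite invrN opprK.
  - by rewrite mul0r subr0 mul1r expRN lnK // posrE.
  - by rewrite invr0 !mul0r subr0.
apply: measurable_funB; apply: measurable_funM.
- exact: measurable_indic.
- apply: measurableT_comp; first exact: measurable_expR.
  apply: measurableT_comp; [exact: oppr_measurable | exact: measurable_ln].
- exact: measurable_indic.
- apply: measurableT_comp; first exact: measurable_expR.
  apply: measurableT_comp; first exact: oppr_measurable.
  apply: measurableT_comp; [exact: measurable_ln | exact: oppr_measurable].
Qed.

Lemma ln_le_sub1 (y : R) : 0 < y -> ln y <= y - 1.
Proof.
move=> y0; have h : -1 < y - 1 by lra.
by have := le_ln1Dx h; rewrite addrCA subrr addr0.
Qed.

Lemma ln_ge_quad (u : R) : -(1/2) <= u -> u - 2 * u ^+ 2 <= ln (1 + u).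
Proof.
move=> hu.
have pu : 0 < 1 + u by lra.
have h1 : ln ((1 + u)^-1) <= (1 + u)^-1 - 1 by apply: ln_le_sub1; rewrite invr_gt0.
rewrite lnV ?posrE // in h1.
set w := (1 + u)^-1 in h1 *.
have hw : w * (1 + u) = 1 by rewrite /w mulVf // lt0r_neq0.
have w0 : 0 < w by rewrite /w invr_gt0.
have w2 : w <= 2.
  have : 0 <= w * (u + 1/2) by rewrite mulr_ge0 //; lra.
  nra.
have h3 : 0 <= u ^+ 2 * (2 - w) by rewrite mulr_ge0 ?sqr_ge0 //; lra.
rewrite expr2 in h3 *.
nra.
Qed.
End misc.
Lemma bm_ln {d : measure_display} {T : measurableType d} {R : realType}
  (f : T -> R) (c0 : R) : bm f -> 0 < c0 -> (forall x, c0 <= f x) ->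
  bm (fun x => ln (f x)).
Proof.
move=> [mf [M hM]] c00 hc; split.
  by apply: measurableT_comp => //; exact: measurable_ln.
exists (`|ln c0| + `|ln M|) => x.
have fx0 : 0 < f x by apply: lt_le_trans (hc x).
have fM : f x <= M by apply: le_trans (hM x); exact: ler_norm.
have M0 : 0 < M by apply: lt_le_trans fM.
have l1 : ln c0 <= ln (f x) by rewrite ler_ln ?posrE.
have l2 : ln (f x) <= ln M by rewrite ler_ln ?posrE.
have /andP[a1 a2] : - `|ln c0| <= ln c0 <= `|ln c0| by rewrite -ler_norml.
have /andP[b1 b2] : - `|ln M| <= ln M <= `|ln M| by rewrite -ler_norml.
have := normr_ge0 (ln c0); have := normr_ge0 (ln M) => n1 n2.
rewrite ler_norml; apply/andP; split; lra.
Qed.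

Lemma Er_ge0 {d : measure_display} {T : measurableType d} {R : realType}
  (P : probability T R) (f : T -> R) : bm f -> (forall x, 0 <= f x) -> 0 <= Er P f.
Proof.
move=> bf f0; rewrite -(Er_cst P 0); apply: Er_le => //; exact: bm_cst.
Qed.

Lemma sum_unit {R : realType} {m : nat} (j : 'I_m) (F : 'I_m -> R) :
  \sum_(l < m) unit_vec j l * F l = F j.
Proof.
rewrite (bigD1 j) //= /unit_vec eqxx mul1r big1 ?addr0 // => l /negbTE ->.
by rewrite mul0r.
Qed.

Section main.
Context {d : measure_display} {T : measurableType d} {R : realType}.
Variables (P : probability T R) (m : nat) (X : nat -> 'I_m -> T -> R)
  (Xmin Xmax : 'I_m -> R) (n : nat) (j : 'I_m).
Hypothesis hX : iid_vectors P X.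
Hypothesis hmin : forall i, -1 < Xmin i.
Hypothesis hae : forall k i, {ae P, forall x, Xmin i <= X k i x <= Xmax i}.
Hypothesis n1 : (1 <= n)%N.

Definition cl (l : 'I_m) (y : R) := Num.max (Num.min y (Xmax l)) (Xmin l).
Definition hi (l : 'I_m) := Num.max (Xmax l) (Xmin l).

Lemma cl_ge l y : Xmin l <= cl l y.
Proof. by rewrite /cl le_max; apply/orP; right; exact: le_refl. Qed.

Lemma cl_le l y : cl l y <= hi l.
Proof.
rewrite /cl /hi ge_max; apply/andP; split.
  by rewrite le_max; apply/orP; left; rewrite ge_min; apply/orP; right; exact: le_refl.
by rewrite le_max; apply/orP; right; exact: le_refl.
Qed.

Lemma cl_id l y : Xmin l <= y <= Xmax l -> cl l y = y.
Proof.
move=> /andP[h1 h2]; rewrite /cl; have -> : Num.min y (Xmax l) = y.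
  by apply/min_idPl.
by apply/max_idPl.
Qed.

Lemma mcl l : measurable_fun setT (cl l).
Proof.
apply: measurable_maxr; last exact: measurable_cst.
apply: measurable_minr; [exact: measurable_id | exact: measurable_cst].
Qed.

Let mXh k l : measurable_fun setT (X k l).
Proof. exact: (@mX _ _ _ P m X hX). Qed.

Definition phi l y := 1 + cl l y.
Definition psi y := (1 + cl j y)^-1.

Lemma phi_pos l y : 0 < phi l y.
Proof. rewrite /phi; have := cl_ge l y; have := hmin l; lra. Qed.
Lemma phi0 l y : 0 <= phi l y. Proof. exact/ltW/phi_pos. Qed.
Lemma phiM l y : phi l y <= 1 + hi l.
Proof. by rewrite /phi lerD2l cl_le. Qed.
Lemma phi_ge l y : 1 + Xmin l <= phi l y.
Proof. by rewrite /phi lerD2l cl_ge. Qed.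
Lemma psi0 y : 0 <= psi y.
Proof. by rewrite /psi invr_ge0 phi0. Qed.
Lemma psiM y : psi y <= (1 + Xmin j)^-1.
Proof.
rewrite /psi lef_pV2 ?posrE ?phi_pos //; first exact: phi_ge.
have := hmin j; lra.
Qed.
Lemma mphi l : measurable_fun setT (phi l).
Proof. by apply: measurable_funD; [exact: measurable_cst | exact: mcl]. Qed.
Lemma mpsi : measurable_fun setT psi.
Proof.
apply: measurableT_comp; first exact: measurable_inv.
exact: mphi.
Qed.

Definition W l x := \prod_(k < n) phi l (X k l x).
Definition Rt l x := \prod_(k < n) @Dk _ _ _ m X (phi l) psi l j k x.
Definition Y l := @Dk _ _ _ m X (phi l) psi l j 0.

Lemma bmY l : bm (Y l).
Proof.
exact: (@bmDk _ _ _ P m X hX (phi l) psi _ _ l j (mphi l) mpsi (phi0 l) (phiM l) psi0 psiM).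
Qed.

Lemma ErRt l : Er P (Rt l) = Er P (Y l) ^+ n.
Proof.
exact: (@factor _ _ _ P m X hX (phi l) psi _ _ l j (mphi l) mpsi (phi0 l) (phiM l) psi0 psiM).
Qed.

Lemma W_ge l x : (1 + Xmin l) ^+ n <= W l x.
Proof.
rewrite /W -[n in X in X <= _]card_ord -prodr_const.
apply: ler_prod => k _; rewrite phi_ge andbT; have := hmin l; lra.
Qed.

Lemma W_pos l x : 0 < W l x.
Proof.
apply: lt_le_trans (W_ge l x); rewrite exprn_gt0 //; have := hmin l; lra.
Qed.

Lemma bmW l : bm (W l).
Proof.
apply: bm_prod => k; split; first by apply: measurableT_comp => //; exact: mphi.
by exists (1 + hi l) => x; rewrite ger0_norm ?phi0 ?phiM.
Qed.

Lemma Rt_eq l x : Rt l x = W l x / W j x.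
Proof.
by rewrite /Rt /W /Dk /psi big_split /= prodfV.
Qed.

Lemma bmRt l : bm (Rt l).
Proof.
apply: bm_prod => k.
exact: (@bmDk _ _ _ P m X hX (phi l) psi _ _ l j (mphi l) mpsi (phi0 l) (phiM l) psi0 psiM).
Qed.

Lemma Rt_ge0 l x : 0 <= Rt l x.
Proof. by rewrite Rt_eq divr_ge0 // ltW // W_pos. Qed.

Lemma Yj x : Y j x = 1.
Proof. by rewrite /Y /Dk /psi /phi mulfV // lt0r_neq0 // -/(phi j _) phi_pos. Qed.

Lemma good : {ae P, forall x, forall k : 'I_n, forall l : 'I_m, X k l x = cl l (X k l x)}.
Proof.
apply: filter_forall => k; apply: filter_forall => l.
by apply: filterS (hae k l) => x /cl_id ->.
Qed.

Lemma good0 : {ae P, forall x, forall l : 'I_m, X 0 l x = cl l (X 0 l x)}.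
Proof.
apply: filter_forall => l.
by apply: filterS (hae 0 l) => x /cl_id ->.
Qed.

Lemma Er_sum_ord (I : finType) (F : I -> T -> R) :
  (forall i, bm (F i)) -> Er P (fun x => \sum_(i : I) F i x) = \sum_(i : I) Er P (F i).
Proof. by move=> h; exact: Er_sum. Qed.

Lemma bm_sum_ord (I : finType) (F : I -> T -> R) :
  (forall i, bm (F i)) -> bm (fun x => \sum_(i : I) F i x).
Proof. by move=> h; exact: bm_sum. Qed.

Definition G (K : 'I_m -> R) x := ln (\sum_(l < m) K l * W l x).

Lemma sumKW_ge K : simplexK K -> exists2 c0, 0 < c0 & forall x, c0 <= \sum_(l < m) K l * W l x.
Proof.
move=> [K0 K1]; exists (\sum_(l < m) K l * (1 + Xmin l) ^+ n).
- have hx l : 0 < 1 + Xmin l by have := hmin l; lra.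
  rewrite lt_def sumr_ge0 ?andbT; last first.
    by move=> l _; rewrite mulr_ge0 // exprn_ge0 // ltW.
  apply/negP => /eqP h0.
  have := psumr_eq0P (fun l _ => mulr_ge0 (K0 l) (exprn_ge0 n (ltW (hx l)))) h0.
  move=> hz; have : \sum_(l < m) K l = 0.
    apply: big1 => l _; have := hz l isT; move/eqP; rewrite mulf_eq0 => /orP[/eqP //|].
    by rewrite expf_eq0 (gt_eqF (hx l)) andbF.
  by rewrite K1; move/eqP; rewrite oner_eq0.
- by move=> x; apply: ler_sum => l _; apply: ler_wpM2l => //; exact: W_ge.
Qed.

Lemma bmG K : simplexK K -> bm (G K).
Proof.
move=> sK; have [c0 c00 hc] := sumKW_ge _ sK.
apply: (bm_ln _ _ _ c00 hc); apply: bm_sum_ord => l; apply: bmM; [exact: bm_cst | exact: bmW].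
Qed.

Lemma bmLW : bm (fun x => ln (W j x)).
Proof.
apply: (bm_ln _ _ (bmW j) _ (W_ge j)); rewrite exprn_gt0 //; have := hmin j; lra.
Qed.

Lemma gE K : simplexK K -> g_n P X n K = ((n%:R)^-1 * Er P (G K))%:E.
Proof.
move=> sK; rewrite /g_n (@E_ae _ _ _ P _ (G K)); first by rewrite E_Er //; exact: bmG.
- apply: measurableT_comp; first exact: measurable_ln.
  apply: measurable_funD; first exact: measurable_cst.
  apply: measurable_sum => l; apply: measurable_funM; first exact: measurable_cst.
  rewrite /Xcal; apply: measurable_funB; last exact: measurable_cst.
  apply: measurable_prod => k _; apply: measurable_funD; [exact: measurable_cst | exact: mXh].
- by case: (bmG _ sK).
- apply: filterS good => x hx; rewrite /G; congr ln.
  have e l : \prod_(k < n) (1 + X k l x) = W l x.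
    by apply: eq_bigr => k _; rewrite /phi -hx.
  rewrite /Xcal (eq_bigr (fun l => K l * W l x - K l)); last first.
    by move=> l _; rewrite e mulrBr mulr1.
  by rewrite sumrB (proj2 sK) addrC subrK.
Qed.

Lemma simplex_unit (i : 'I_m) : simplexK (@unit_vec R m i).
Proof.
split; first by move=> l; rewrite /unit_vec; case: (l == i).
have := sum_unit i (fun _ => 1 : R); rewrite (eq_bigr (fun l => unit_vec i l)) //.
by move=> l _; rewrite mulr1.
Qed.

Lemma gej : g_n P X n (unit_vec j) = ((n%:R)^-1 * Er P (fun x => ln (W j x)))%:E.
Proof.
rewrite gE; last exact: simplex_unit.
by congr ((_ * _)%:E); apply: Er_ext => x; rewrite /G sum_unit.
Qed.

Lemma ratioE i : ('E_P[fun x => ((1 + X 0%N i x) / (1 + X 0%N j x))%R] = (Er P (Y i))%:E)%E.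
Proof.
rewrite (@E_ae _ _ _ P _ (Y i)); first by rewrite E_Er //; exact: bmY.
- apply: measurable_funM.
    by apply: measurable_funD; [exact: measurable_cst | exact: mXh].
  apply: measurableT_comp; first exact: measurable_inv.
  by apply: measurable_funD; [exact: measurable_cst | exact: mXh].
- by case: (bmY i).
- apply: filterS good0 => x hx.
  by rewrite /Y /Dk /phi /psi -!hx.
Qed.

Lemma main_iff :
  (forall K, simplexK K -> (g_n P X n K <= g_n P X n (unit_vec j))%E)
   <->
  (forall i, i != j ->
      ('E_P[fun x => ((1 + X 0%N i x) / (1 + X 0%N j x))%R] <= 1)%E).
Proof.
have npos : 0 < (n%:R)^-1 :> R by rewrite invr_gt0 ltr0n.
have gle K : simplexK K ->
    (g_n P X n K <= g_n P X n (unit_vec j))%E <-> Er P (G K) <= Er P (fun x => ln (W j x)).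
  by move=> sK; rewrite gE // gej lee_fin ler_pM2l.
split.
- move=> opt i ij; rewrite ratioE lee_fin leNgt; apply/negP => hY.
  set c := Er P (Rt i).
  have hc : 1 < c by rewrite /c ErRt exprn_egt1 // -lt0n.
  have [_ [B hB]] := bmRt i.
  set B1 := `|B| + 1.
  have B10 : 0 < B1 by rewrite /B1 ltr_pwDr // normr_ge0.
  have B1sq : 0 < B1 ^+ 2 by rewrite exprn_gt0.
  set t := Num.min (1/2) ((c - 1) / (4 * B1 ^+ 2)).
  have t0 : 0 < t by rewrite lt_min; apply/andP; split; [lra | rewrite divr_gt0 //; [lra | rewrite mulr_gt0]].
  have th : t <= 1/2 by rewrite ge_min lexx.
  have tc : t * (4 * B1 ^+ 2) <= c - 1.
    rewrite -ler_pdivlMr ?mulr_gt0 // /t ge_min; apply/orP; right; exact: lexx.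
  pose K := fun l => (1 - t) * unit_vec j l + t * unit_vec i l.
  have sK : simplexK K.
    split.
      move=> l; rewrite /K /unit_vec; case: (l == j); case: (l == i); lra.
    rewrite /K big_split /= -!mulr_sumr.
    have := proj2 (simplex_unit j); have := proj2 (simplex_unit i).
    by move=> -> ->; ring.
  have := (gle K sK).1 (opt K sK).
  apply/negP; rewrite -ltNge.
  pose kap := - t - 2 * (t ^+ 2 * B1 ^+ 2).
  have bmL : bm (fun x => ln (W j x) + (t * Rt i x + kap)).
    apply: bmD; first exact: bmLW.
    apply: bmD; [apply: bmM; [exact: bm_cst | exact: bmRt] | exact: bm_cst].
  have EL : Er P (fun x => ln (W j x) + (t * Rt i x + kap)) =
            Er P (fun x => ln (W j x)) + (t * c + kap).
    rewrite ErD //; first last.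
      by apply: bmD; [apply: bmM; [exact: bm_cst | exact: bmRt] | exact: bm_cst].
      exact: bmLW.
    rewrite ErD ?ErZ ?Er_cst //; [exact: bmRt | apply: bmM; [exact: bm_cst | exact: bmRt] | exact: bm_cst].
  have low : Er P (fun x => ln (W j x) + (t * Rt i x + kap)) <= Er P (G K).
    apply: Er_le => //; first exact: bmG.
    move=> x.
    have Wj0 := W_pos j x.
    have r0 := Rt_ge0 i x.
    have rB : Rt i x <= `|B| by apply: le_trans (ler_norm _) (le_trans (hB x) (ler_norm B)).
    rewrite /G.
    have ->: \sum_(l < m) K l * W l x = W j x * (1 + t * (Rt i x - 1)).
      rewrite /K (eq_bigr (fun l => (1 - t) * (unit_vec j l * W l x) + t * (unit_vec i l * W l x))); last first.
        by move=> l _; ring.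
      rewrite big_split /= -!mulr_sumr !sum_unit Rt_eq.
      field; exact: lt0r_neq0.
    set u := t * (Rt i x - 1).
    have u1 : -(1/2) <= u by rewrite /u; nra.
    rewrite lnM ?posrE //; last by lra.
    rewrite lerD2l.
    apply: (@le_trans _ _ (u - 2 * u ^+ 2)); last exact: ln_ge_quad.
    have usq : u ^+ 2 <= t ^+ 2 * B1 ^+ 2.
      rewrite /u exprMn; apply: ler_wpM2l; first exact: sqr_ge0.
      have nB := normr_ge0 B.
      have hp : 0 <= (B1 - (Rt i x - 1)) * (B1 + (Rt i x - 1)).
        by apply: mulr_ge0; rewrite /B1; lra.
      rewrite !expr2; nra.
    have hu : u = t * Rt i x - t by rewrite /u mulrBr mulr1.
    rewrite /kap; lra.
  have up : Er P (fun x => ln (W j x)) + (t * c + kap) <= Er P (G K) by rewrite -EL.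
  have pos : 0 < t * c + kap.
    rewrite /kap.
    have h1 : 0 < t * (c - 1) by rewrite mulr_gt0 //; lra.
    have h2 : t * (t * (4 * B1 ^+ 2)) <= t * (c - 1) by apply: ler_wpM2l => //; exact: ltW.
    rewrite !expr2 in h2 *; nra.
  lra.
- move=> H K sK; apply/(gle K sK).
  have Yle l : Er P (Y l) <= 1.
    have [->|lj] := eqVneq l j.
      by rewrite (Er_ext P _ (fun _ => 1) Yj) Er_cst.
    by have := H l lj; rewrite ratioE lee_fin.
  have Rle l : Er P (Rt l) <= 1.
    rewrite ErRt; apply: exprn_ile1 => //; apply: Er_ge0; first exact: bmY.
    by move=> x; rewrite /Y /Dk mulr_ge0 ?phi0 ?psi0.
  have bmS : bm (fun x => \sum_(l < m) K l * Rt l x + -1).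
    apply: bmD; last exact: bm_cst.
    by apply: bm_sum_ord => l; apply: bmM; [exact: bm_cst | exact: bmRt].
  apply: (@le_trans _ _ (Er P (fun x => ln (W j x) + (\sum_(l < m) K l * Rt l x + -1)))).
    apply: Er_le; [exact: bmG | exact: bmD bmLW bmS |].
    move=> x; rewrite /G.
    have [c0 c00 hc] := sumKW_ge _ sK.
    have S0 : 0 < \sum_(l < m) K l * W l x by apply: lt_le_trans (hc x).
    have Wj0 := W_pos j x.
    have -> : \sum_(l < m) K l * Rt l x = (\sum_(l < m) K l * W l x) / W j x.
      rewrite mulr_suml; apply: eq_bigr => l _; rewrite Rt_eq; ring.
    have := ln_le_sub1 _ (divr_gt0 S0 Wj0).
    rewrite ln_div ?posrE //; lra.
  rewrite ErD //; last exact: bmLW.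
  rewrite ErD; last 2 first.
    by apply: bm_sum_ord => l; apply: bmM; [exact: bm_cst | exact: bmRt].
    exact: bm_cst.
  rewrite Er_cst Er_sum_ord; last by move=> l; apply: bmM; [exact: bm_cst | exact: bmRt].
  have : \sum_(l < m) Er P (fun x => K l * Rt l x) <= 1.
    rewrite -(proj2 sK); apply: ler_sum => l _; rewrite ErZ; last exact: bmRt.
    by apply: ler_piMr; [exact: (proj1 sK) | exact: Rle].
  lra.
Qed.

End main.

Theorem theorem2 (d : measure_display) (T : measurableType d) (R : realType)
  (P : probability T R) (m : nat) (X : nat -> 'I_m -> T -> R)
  (Xmin Xmax : 'I_m -> R) (n : nat) (j : 'I_m) :
  (2 <= m)%N ->
  iid_vectors P X ->
  (forall i, -1 < Xmin i) ->
  (forall k i, {ae P, forall x, Xmin i <= X k i x <= Xmax i}) ->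
  (exists i0 (r : R), 0 <= r /\ forall k, {ae P, forall x, X k i0 x = r}) ->
  (1 <= n)%N ->
  ((forall K, simplexK K -> (g_n P X n K <= g_n P X n (unit_vec j))%E)
   <->
   (forall i, i != j ->
      ('E_P[fun x => ((1 + X 0%N i x) / (1 + X 0%N j x))%R] <= 1)%E)).
Proof.
move=> _ hX hmin hae _ n1.
exact: (@main_iff _ _ _ P m X Xmin Xmax n j hX hmin hae n1).
Qed.
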